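(* Let $a,b,q$ be complex numbers with $q\ne0$, and define $B_{n,k}(a,b)$ ($n\ge k\ge0$) by $$z^k=\sum_{n=k}^\infty B_{n,k}(a,b)\,z^n\frac{(az;q)_n}{(bz;q)_n}\qquad(k\ge0)$$ in $\mathbb{C}[[z]]$. Then for every integer $n\ge1$ (and $0\le k\le n$) and every $t\in\mathbb{C}$, $$B_{n,k}(at,bt)=B_{n,k}(a,b)\,t^{n-k},$$ and $$[z^{n}]\Big\{\frac{(bz;q)_{n-1}}{(az;q)_n}\Big\}=a\sum_{i=0}^{n-1}B_{n-i,1}(a,b)\,q^{(n-i)i}\,[z^{i}]\Big\{\frac{(bz;q)_i}{(az;q)_{i+1}}\Big\}.$$
   Context: $(x;q)_n=\prod_{j=0}^{n-1}(1-xq^j)$ for $n\ge0$, $(x;q)_0=1$; quotients are regarded as formal power series in $z$ and $[z^m]\{f\}$ denotes the coefficient of $z^m$. The family $\{z^n(az;q)_n/(bz;q)_n\}_{n\ge0}$ is a basis of $\mathbb{C}[[z]]$ in the formal sense, so the $B_{n,k}(a,b)$ are uniquely determined. *)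

(* Defs.v *)
From HB Require Import structures.
From mathcomp Require Import all_boot all_order all_algebra.
From mathcomp Require Export complex.
From mathcomp Require Export reals.
Set Implicit Arguments. Unset Strict Implicit. Unset Printing Implicit Defensive.
Import Order.TTheory GRing.Theory Num.Theory.
Local Open Scope ring_scope.

Definition qpoch {F : comRingType} (q x : F) (n : nat) : {poly F} :=
  \prod_(j < n) (1 - (x * q ^+ j) *: 'X).

(* [z^m] { P / Q } for polynomials P, Q with Q(0) = 1, as formal power series:
   1/Q = sum_{j>=0} (1 - Q)^j, and since (1-Q) has zero constant term only
   j <= m contribute to the coefficient of z^m. *)
Definition coef_div {F : comRingType} (P Q : {poly F}) (m : nat) : F :=
  (P * \sum_(j < m.+1) (1 - Q) ^+ j)`_m.

(* Main.v *)
Require Import Defs.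
From HB Require Import structures.
From mathcomp Require Import all_boot all_order all_algebra.
From mathcomp Require Import complex reals.
From mathcomp Require Import ring zify.
Import Order.TTheory GRing.Theory Num.Theory.
Local Open Scope ring_scope.

Section Gen.
Context {F : comNzRingType}.
Implicit Types (P Q U V : {poly F}).

Definition eqm (N : nat) P Q := forall m, (m <= N)%N -> P`_m = Q`_m.
Definition TT (N : nat) Q : {poly F} := \sum_(j < N.+1) (1 - Q) ^+ j.

Lemma eqm_refl N P : eqm N P P. Proof. by []. Qed.
Lemma eqm_sym N P Q : eqm N P Q -> eqm N Q P.
Proof. by move=> h m hm; rewrite h. Qed.
Lemma eqm_trans N P Q U : eqm N P Q -> eqm N Q U -> eqm N P U.
Proof. by move=> h1 h2 m hm; rewrite h1 ?h2. Qed.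
Lemma eqm_le N M P Q : (M <= N)%N -> eqm N P Q -> eqm M P Q.
Proof. by move=> hMN h m hm; apply: h; apply: leq_trans hMN. Qed.

Lemma eqmM N P P' Q Q' : eqm N P P' -> eqm N Q Q' -> eqm N (P * Q) (P' * Q').
Proof.
move=> h1 h2 m hm; rewrite !coefM; apply: eq_bigr => i _.
have hi : (i <= N)%N by apply: leq_trans hm; rewrite -ltnS.
rewrite h1 // h2 //; apply: leq_trans hm; exact: leq_subr.
Qed.

Arguments eqmM {N P P' Q Q'}.

Lemma low_vanish Q : Q`_0 = 1 -> forall j m, (m < j)%N -> ((1 - Q) ^+ j)`_m = 0.
Proof.
move=> h0 j m hm.
have hr : root (1 - Q) 0.
  by rewrite /root horner_coef0 coefB coefC /= h0 subrr.
case/factor_theorem: hr => R ->.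
by rewrite subr0 exprMn coefMXn hm.
Qed.

Lemma TT1 N Q : Q`_0 = 1 -> eqm N (Q * TT N Q) 1.
Proof.
move=> h0 m hm.
have -> : Q * TT N Q = 1 - (1 - Q) ^+ N.+1.
  have eQ : Q = 1 - (1 - Q) by rewrite opprB addrC subrK.
  rewrite /TT {1}eQ; move: (1 - Q) => u.
  by rewrite -opprB mulNr -subrX1 opprB.
by rewrite coefB low_vanish // subr0.
Qed.

Lemma charq N Q U P m : Q`_0 = 1 -> eqm N (Q * U) P -> (m <= N)%N ->
  U`_m = coef_div P Q m.
Proof.
move=> h0 h hm; rewrite /coef_div.
have h' : eqm m (Q * U) P by apply: eqm_le h.
have e1 : eqm m U (P * TT m Q).
  apply: (@eqm_trans _ _ (U * (Q * TT m Q))).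
    rewrite -[U in eqm _ U _]mulr1; apply: eqmM => //; apply: eqm_sym; exact: TT1.
  rewrite mulrA [U * Q]mulrC; apply: eqmM => //.
by rewrite e1.
Qed.

Lemma trunc_char N P Q m : Q`_0 = 1 -> (m <= N)%N -> (P * TT N Q)`_m = coef_div P Q m.
Proof.
move=> h0 hm; apply: (@charq N) => //.
rewrite mulrCA -[P in eqm _ _ P]mulr1; apply: eqmM => //; exact: TT1.
Qed.

Lemma eqm_cancel N Q U V : Q`_0 = 1 -> eqm N (Q * U) (Q * V) -> eqm N U V.
Proof.
move=> h0 h m hm.
rewrite (@charq N Q U (Q*V) m h0 h hm) -(@trunc_char N (Q*V) Q m h0 hm).
rewrite mulrAC; have := eqmM (@TT1 N Q h0) (eqm_refl N V); rewrite mul1r; exact.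
Qed.


Definition sc (c : F) P := P \Po (c *: 'X).

Lemma coef_sc c P i : (sc c P)`_i = c ^+ i * P`_i.
Proof.
rewrite /sc coef_comp_poly.
under eq_bigr => k _ do rewrite exprZn coefZ coefXn mulrA.
case: (ltnP i (size P)) => hi.
  rewrite (bigD1 (Ordinal hi)) //=.
  rewrite eqxx mulr1 big1 ?addr0 ?[_ * c ^+ _]mulrC //.
  move=> k hk; have : (i != k).
    by rewrite eq_sym; apply: contra hk => /eqP e; apply/eqP/val_inj.
  by move/negbTE => ->; rewrite mulr0.
rewrite nth_default // mulr0 big1 // => k _.
have : (i != k) by apply/eqP => e; move: (ltn_ord k); rewrite -e ltnNge hi.
by move/negbTE => ->; rewrite mulr0.
Qed.

Lemma eqm_sc N c P Q : eqm N P Q -> eqm N (sc c P) (sc c Q).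
Proof. by move=> h m hm; rewrite !coef_sc h. Qed.

Lemma sc1 c : sc c 1 = 1.
Proof. by rewrite /sc comp_polyC. Qed.

Lemma scM c P Q : sc c (P * Q) = sc c P * sc c Q.
Proof. by rewrite /sc comp_polyM. Qed.

Lemma qpoch_sc (q x c : F) n : sc c (qpoch q x n) = qpoch q (x * c) n.
Proof.
rewrite /sc /qpoch rmorph_prod; apply: eq_bigr => j _.
rewrite rmorphB rmorph1 /= linearZ /= comp_polyX scalerA; congr (1 - _ *: _).
by rewrite mulrAC.
Qed.

Lemma qpoch0 (q x : F) n : (qpoch q x n)`_0 = 1.
Proof.
rewrite -horner_coef0 /qpoch horner_prod big1 // => j _.
by rewrite !hornerE /= ?mulr0 ?subr0.
Qed.

Lemma coef_div_sc c P Q m : Q`_0 = 1 ->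
  coef_div (sc c P) (sc c Q) m = c ^+ m * coef_div P Q m.
Proof.
move=> h0; rewrite /coef_div -coef_sc scM /sc rmorph_sum.
symmetry; rewrite (eq_bigr (fun j : 'I_m.+1 => (1 - (Q \Po c *: 'X)) ^+ j)) // => j _.
by rewrite rmorphXn rmorphB rmorph1.
Qed.

Lemma coef_div_shift n P Q m : (n <= m)%N -> Q`_0 = 1 ->
  coef_div ('X^n * P) Q m = coef_div P Q (m - n).
Proof.
move=> hn h0; rewrite /coef_div -mulrA coefXnM ltnNge hn /=.
apply: (@trunc_char m) => //; exact: leq_subr.
Qed.

Lemma qpochSl (q x : F) n : qpoch q x n.+1 = (1 - x *: 'X) * sc q (qpoch q x n).
Proof.
rewrite qpoch_sc /qpoch big_ord_recl /= expr0 mulr1; congr (_ * _).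
by apply: eq_bigr => j _; rewrite /bump /= add1n exprS mulrA.
Qed.

Lemma qpochSr (q x : F) n : qpoch q x n.+1 = qpoch q x n * (1 - (x * q ^+ n) *: 'X).
Proof. by rewrite /qpoch big_ord_recr. Qed.

Lemma qpochD (q x : F) n k : qpoch q x (n + k) = qpoch q x n * qpoch q (x * q ^+ n) k.
Proof.
rewrite /qpoch big_split_ord /=; congr (_ * _).
by apply: eq_bigr => j _; rewrite exprD mulrA.
Qed.

Lemma coef1mX (c : F) P i : ((1 - c *: 'X) * P)`_i.+1 = P`_i.+1 - c * P`_i.
Proof. by rewrite mulrBl mul1r coefB -scalerAl coefZ coefXM. Qed.

End Gen.
Arguments eqmM {F N P P' Q Q'}.

Lemma coef_div_map (F K : comNzRingType) (f : {rmorphism F -> K}) (P Q : {poly F}) m :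
  f (coef_div P Q m) = coef_div (map_poly f P) (map_poly f Q) m.
Proof.
rewrite /coef_div -coef_map rmorphM /= rmorph_sum.
rewrite (eq_bigr (fun j : 'I_m.+1 => (1 - map_poly f Q) ^+ j)) // => j _.
by rewrite rmorphXn rmorphB rmorph1.
Qed.

Lemma map_qpoch (F K : comNzRingType) (f : {rmorphism F -> K}) (q x : F) n :
  map_poly f (qpoch q x n) = qpoch (f q) (f x) n.
Proof.
rewrite /qpoch rmorph_prod; apply: eq_bigr => j _.
by rewrite rmorphB rmorph1 /= map_polyZ map_polyX rmorphM rmorphXn.
Qed.

Lemma HL (F : idomainType) (q a b : F) n : q ^+ n.+1 != 1 ->
  coef_div (qpoch q b n) (qpoch q a n.+1) n.+1
  = a * coef_div (qpoch q b n.+1) (qpoch q a n.+2) n.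
Proof.
move=> hq.
set G := qpoch q b n * TT n.+1 (qpoch q a n.+1).
set H := qpoch q b n.+1 * TT n.+1 (qpoch q a n.+2).
have gE : forall m, (m <= n.+1)%N -> G`_m = coef_div (qpoch q b n) (qpoch q a n.+1) m.
  by move=> m hm; apply: trunc_char => //; exact: qpoch0.
have hE : forall m, (m <= n.+1)%N -> H`_m = coef_div (qpoch q b n.+1) (qpoch q a n.+2) m.
  by move=> m hm; apply: trunc_char => //; exact: qpoch0.
have A : eqm n.+1 ((1 - a *: 'X) * H) ((1 - b *: 'X) * sc q G).
  apply: (@eqm_cancel _ n.+1 (qpoch q a n.+2)); first exact: qpoch0.
  apply: (@eqm_trans _ _ _ ((1 - a *: 'X) * qpoch q b n.+1)).
    have -> : qpoch q a n.+2 * ((1 - a *: 'X) * H) =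
       ((1 - a *: 'X) * qpoch q b n.+1) * (qpoch q a n.+2 * TT n.+1 (qpoch q a n.+2)).
      by rewrite /H; ring.
    rewrite -[X in eqm _ _ X]mulr1; apply: eqmM => //; apply: TT1; exact: qpoch0.
  apply: eqm_sym.
  have -> : qpoch q a n.+2 * ((1 - b *: 'X) * sc q G) =
     ((1 - a *: 'X) * (1 - b *: 'X) * sc q (qpoch q b n)) *
       sc q (qpoch q a n.+1 * TT n.+1 (qpoch q a n.+1)).
    by rewrite /G !scM (qpochSl q a n.+1); ring.
  apply: (@eqm_trans _ _ _ (((1 - a *: 'X) * (1 - b *: 'X) * sc q (qpoch q b n)) * 1)).
    apply: eqmM => //; rewrite -(sc1 q); apply: eqm_sc; apply: TT1; exact: qpoch0.
  by rewrite mulr1 (qpochSl q b n) mulrA.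
have B : eqm n.+1 ((1 - (b * q ^+ n) *: 'X) * G) ((1 - (a * q ^+ n.+1) *: 'X) * H).
  apply: (@eqm_cancel _ n.+1 (qpoch q a n.+2)); first exact: qpoch0.
  apply: (@eqm_trans _ _ _ ((1 - (a * q ^+ n.+1) *: 'X) * qpoch q b n.+1)); last first.
    have -> : qpoch q a n.+2 * ((1 - (a * q ^+ n.+1) *: 'X) * H) =
       ((1 - (a * q ^+ n.+1) *: 'X) * qpoch q b n.+1) * (qpoch q a n.+2 * TT n.+1 (qpoch q a n.+2)).
      by rewrite /H; ring.
    rewrite -[X in eqm _ X _]mulr1; apply: eqmM => //; apply: eqm_sym; apply: TT1; exact: qpoch0.
  have -> : qpoch q a n.+2 * ((1 - (b * q ^+ n) *: 'X) * G) =
     ((1 - (b * q ^+ n) *: 'X) * (1 - (a * q ^+ n.+1) *: 'X) * qpoch q b n) *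
       (qpoch q a n.+1 * TT n.+1 (qpoch q a n.+1)).
    by rewrite /G (qpochSr q a n.+1); ring.
  apply: (@eqm_trans _ _ _ (((1 - (b * q ^+ n) *: 'X) * (1 - (a * q ^+ n.+1) *: 'X) * qpoch q b n) * 1)).
    apply: eqmM => //; apply: TT1; exact: qpoch0.
  by rewrite mulr1 (qpochSr q b n); have -> : forall x y z : {poly F}, x * y * z = y * (z * x) by move=> x y z; ring.
have A' := A n.+1 (leqnn _).
have B' := B n.+1 (leqnn _).
rewrite !coef1mX !coef_sc in A'.
rewrite !coef1mX in B'.
rewrite -gE // -hE //.
apply: (mulfI (x := q ^+ n.+1 - 1)); first by rewrite subr_eq0.
apply/eqP; rewrite -subr_eq0; apply/eqP.
transitivity (((q ^+ n.+1 * G`_n.+1 - b * (q ^+ n * G`_n)) - (H`_n.+1 - a * H`_n))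
   - ((G`_n.+1 - b * q ^+ n * G`_n) - (H`_n.+1 - a * q ^+ n.+1 * H`_n))).
  by ring.
by rewrite -A' B' !subrr.
Qed.

Lemma HLC (F : idomainType) (q a b : F) n :
  coef_div (qpoch q b n) (qpoch q a n.+1) n.+1
  = a * coef_div (qpoch q b n.+1) (qpoch q a n.+2) n.
Proof.
have hX : ('X : {poly F}) ^+ n.+1 != 1.
  apply/eqP => e; have := congr1 (fun p : {poly F} => size p) e; rewrite size_polyXn size_poly1.
  by [].
have := @HL _ _ (a%:P) (b%:P) _ hX.
move/(congr1 (horner_eval q)).
rewrite rmorphM /= !coef_div_map !map_qpoch /= !horner_evalE hornerX !hornerC.
by [].
Qed.

Lemma P2 (F : comNzRingType) (q a b : F) (B : nat -> F) n :
  (forall m, ('X^1 : {poly F})`_m =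
     \sum_(1 <= j < m.+1) B j * coef_div ('X^j * qpoch q a j) (qpoch q b j) m) ->
  (1 <= n)%N ->
  \sum_(i < n) B (n - i)%N * q ^+ ((n - i) * i)%N
       * coef_div (qpoch q b i) (qpoch q a i.+1) i
  = coef_div (qpoch q b n) (qpoch q a n.+1) n.-1.
Proof.
move=> hB hn.
pose f j := 'X^j * qpoch q a j * TT n (qpoch q b j).
pose W := \sum_(1 <= j < n.+1) B j *: f j.
pose Y := qpoch q b n * TT n (qpoch q a n.+1).
have fE : forall j m, (m <= n)%N ->
    (f j)`_m = coef_div ('X^j * qpoch q a j) (qpoch q b j) m.
  by move=> j m hm; apply: trunc_char => //; exact: qpoch0.
have W1 : eqm n W 'X.
  move=> m hm; have := hB m; rewrite expr1 => ->.
  rewrite /W coef_sum (big_cat_nat _ (n := m.+1)) //= ?ltnS //.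
  rewrite [X in _ + X]big_nat_cond [X in _ + X]big1 ?addr0; last first.
    move=> j /andP[/andP[hj _] _].
    by rewrite coefZ /f -mulrA coefXnM hj mulr0.
  by apply: eq_big_nat => j hj; rewrite coefZ fE.
have key : (W * Y)`_n = coef_div (qpoch q b n) (qpoch q a n.+1) n.-1.
  rewrite (eqmM W1 (eqm_refl n Y) n (leqnn n)) coefXM (negbTE (lt0n_neq0 hn)).
  by apply: trunc_char; [exact: qpoch0 | exact: leq_pred].
rewrite -key /W mulr_suml coef_sum.
have per : forall j, (1 <= j < n.+1)%N -> (B j *: f j * Y)`_n =
   B j * (q ^+ (j * (n - j)) * coef_div (qpoch q b (n - j)) (qpoch q a (n - j).+1) (n - j)).
  move=> j /andP[h1 h2]; rewrite ltnS in h2.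
  rewrite -scalerAl coefZ; congr (_ * _).
  rewrite /f -!mulrA coefXnM ltnNge h2 /=.
  set i := (n - j)%N.
  have ni : n = (j + i)%N by rewrite /i subnKC.
  rewrite (@charq _ n (qpoch q (a * q ^+ j) i.+1) _ (qpoch q (b * q ^+ j) i)); first last.
  - exact: leq_subr.
  - have E1 : qpoch q a n.+1 = qpoch q a j * qpoch q (a * q ^+ j) i.+1.
      by rewrite {1}ni -addnS qpochD.
    have E2 : qpoch q b n = qpoch q b j * qpoch q (b * q ^+ j) i.
      by rewrite {1}ni qpochD.
    rewrite /Y.
    set T1 := TT n (qpoch q b j).
    set T2 := TT n (qpoch q a n.+1).
    rewrite E2.
    have -> : qpoch q (a * q ^+ j) i.+1 * (qpoch q a j * (T1 * (qpoch q b j * qpoch q (b * q ^+ j) i * T2)))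
       = (qpoch q (b * q ^+ j) i * (qpoch q b j * T1)) * (qpoch q a n.+1 * T2).
      by rewrite E1; ring.
    rewrite -[X in eqm _ _ X]mulr1 -[X in eqm _ _ (X * 1)]mulr1.
    apply: eqmM; last by apply: TT1; exact: qpoch0.
    apply: eqmM => //; apply: TT1; exact: qpoch0.
  - exact: qpoch0.
  rewrite -!qpoch_sc coef_div_sc ?qpoch0 //.
  by rewrite exprM.
rewrite (eq_big_nat _ _ per).
rewrite big_add1 /= big_mkord (reindex_inj rev_ord_inj) /=.
apply: eq_bigr => i _.
have e : (n - i.+1).+1 = (n - i)%N by rewrite subnSK.
rewrite e subKn ?mulrA //; exact: ltnW.
Qed.


Lemma P1 (F : comNzRingType) (q : F) (B : F -> F -> nat -> nat -> F)
  (hB : forall (a b : F) (k m : nat),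
      ('X^k : {poly F})`_m =
      \sum_(k <= n < m.+1)
         B a b n k * coef_div ('X^n * qpoch q a n) (qpoch q b n) m)
  (a b t : F) (k : nat) :
  forall n, (k <= n)%N -> B (a * t) (b * t) n k = B a b n k * t ^+ (n - k).
Proof.
have Cs : forall x y j m, (j <= m)%N ->
    coef_div ('X^j * qpoch q (x * t) j) (qpoch q (y * t) j) m
    = t ^+ (m - j) * coef_div ('X^j * qpoch q x j) (qpoch q y j) m.
  move=> x y j m hj; rewrite coef_div_shift //; last exact: qpoch0.
  rewrite coef_div_shift //; last exact: qpoch0.
  rewrite -!qpoch_sc coef_div_sc //; exact: qpoch0.
have C1 : forall x y j, coef_div ('X^j * qpoch q x j) (qpoch q y j) j = 1.
  move=> x y j; rewrite coef_div_shift //; last exact: qpoch0.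
  rewrite subnn /coef_div coef0M qpoch0.
  by rewrite big_ord1 expr0 coef1 mul1r.
move=> n; elim/ltn_ind: n => n IH hk.
have h1 := hB (a * t) (b * t) k n.
have h2 := hB a b k n.
rewrite big_nat_recr //= C1 mulr1 in h1.
rewrite big_nat_recr //= C1 mulr1 in h2.
set S1 := \sum_(k <= i < n) _ in h1.
set S0 := \sum_(k <= i < n) _ in h2.
have S : S1 = t ^+ (n - k) * S0.
  rewrite /S1 /S0 mulr_sumr; apply: eq_big_nat => j /andP[hkj hjn].
  rewrite IH // Cs; last exact: ltnW.
  have e : (n - k = (j - k) + (n - j))%N by lia.
  by rewrite e exprD; ring.
have Xe : ('X^k : {poly F})`_n * t ^+ (n - k) = ('X^k : {poly F})`_n.
  rewrite coefXn; case: eqP => [->|_]; first by rewrite subnn expr0 mulr1.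
  by rewrite mul0r.
have -> : B (a * t) (b * t) n k = ('X^k : {poly F})`_n - S1.
  by rewrite h1 addrAC subrr add0r.
rewrite -Xe {1}h2 S; ring.
Qed.

Theorem mainTheorem6 (R : realType) (q : R[i]) (hq : q != 0)
  (B : R[i] -> R[i] -> nat -> nat -> R[i])
  (hB : forall (a b : R[i]) (k m : nat),
      ('X^k : {poly R[i]})`_m =
      \sum_(k <= n < m.+1)
         B a b n k * coef_div ('X^n * qpoch q a n) (qpoch q b n) m) :
  forall (a b t : R[i]) (n k : nat), (1 <= n)%N -> (k <= n)%N ->
    B (a * t) (b * t) n k = B a b n k * t ^+ (n - k)
    /\ coef_div (qpoch q b n.-1) (qpoch q a n) n =
       a * \sum_(i < n) B a b (n - i)%N 1%N * q ^+ ((n - i) * i)%N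
             * coef_div (qpoch q b i) (qpoch q a i.+1) i.
Proof.
move=> a b t n k hn hk; split; first exact: P1.
rewrite (@P2 _ q a b (fun j => B a b j 1%N) n (fun m => hB a b 1%N m) hn).
case: n hn {hk} => [//|n] _ /=.
exact: HLC.
Qed.
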